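(* There is an absolute constant $C>0$ such that the following holds. Let $n,d,k\ge1$, let $\phi:\mathbb{R}\to\mathbb{R}$ be $L$-Lipschitz with $\phi(0)=0$, let $b>0$, and let $x_1,\dots,x_n,x'_1,\dots,x'_n\in\mathbb{R}^d$ satisfy $\|x_i\|_2,\|x'_i\|_2\le b$. For $a>0$ let $\mathcal{G}^k_a=\{A\in\mathbb{R}^{d\times k}:\|A\|_{2,\infty}\le a\}$. Then $$\widehat{\mathfrak{R}}\big(\mathcal{F}_k(\mathcal{G}^k_a)\big)\le C\left(\frac1n+\frac{a^2b^2L^2}{\sqrt n}\sqrt{\log(2d)}\,\log\big(2+n\,b^2a^2L^2\big)\right);$$ in particular the bound does not depend on $k$.
   Context: For $A\in\mathbb{R}^{d\times k}$ with columns $A_{\cdot 1},\dots,A_{\cdot k}$: $\|A\|_{2,\infty}=\max_{j\le k}\|A_{\cdot j}\|_2$. For $u,v\in\mathbb{R}^k$, $\zeta_k(u,v)=\frac1k\|u-v\|_2^2$. The function $\phi$ is applied coordinatewise to vectors. Given fixed points $x_1,\dots,x_n,x'_1,\dots,x'_n\in\mathbb{R}^d$ and a set $\mathcal{G}\subset\mathbb{R}^{d\times k}$, define $\mathcal{F}_k(\mathcal{G})=\{(\zeta_k(\phi(A^tx_i),\phi(A^tx'_i)))_{i=1}^n : A\in\mathcal{G}\}\subset\mathbb{R}^n$. For a set $\mathcal{F}\subset\mathbb{R}^n$, $\widehat{\mathfrak{R}}(\mathcal{F})=\frac1n\mathbb{E}_\varepsilon\sup_{f\in\mathcal{F}}\sum_{i=1}^n\varepsilon_if_i$,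 where $\varepsilon_1,\dots,\varepsilon_n$ are i.i.d. uniform on $\{-1,1\}$. *)

(* Defs.v *)
From HB Require Import structures.
From mathcomp Require Import all_boot all_order all_algebra.
From mathcomp Require Import all_classical all_reals all_analysis.
Set Implicit Arguments. Unset Strict Implicit. Unset Printing Implicit Defensive.
Import Order.TTheory GRing.Theory Num.Theory.
Local Open Scope classical_set_scope.
Local Open Scope ring_scope.

Section Defs.
Variable R : realType.

Definition norm2 (m : nat) (v : 'cV[R]_m) : R :=
  Num.sqrt (\sum_(j < m) (v j 0) ^+ 2).

Definition norm2inf (d k : nat) (A : 'M[R]_(d, k)) : R :=
  \big[Num.max/0]_(j < k) norm2 (col j A).

Definition zeta (k : nat) (u v : 'cV[R]_k) : R :=
  (k%:R)^-1 * (\sum_(j < k) (u j 0 - v j 0) ^+ 2).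

Definition phivec (phi : R -> R) (k : nat) (u : 'cV[R]_k) : 'cV[R]_k :=
  map_mx phi u.

Definition Gball (d k : nat) (a : R) : set 'M[R]_(d, k) :=
  [set A | norm2inf A <= a].

Definition Fk (n d k : nat) (phi : R -> R) (x x' : 'I_n -> 'cV[R]_d)
  (G : set 'M[R]_(d, k)) : set ('I_n -> R) :=
  [set (fun i => zeta (phivec phi (A^T *m x i)) (phivec phi (A^T *m x' i)))
     | A in G].

Definition sgn (b : bool) : R := if b then 1 else -1.

(* Empirical Rademacher complexity (in extended reals, sup = ereal_sup):
   (1/n) * E_eps sup_{f in F} sum_i eps_i f_i, with eps uniform on {-1,1}^n *)
Definition rademacher (n : nat) (F : set ('I_n -> R)) : \bar R :=
  (((n%:R)^-1 / 2 ^+ n)%:E *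
   \sum_(eps : {ffun 'I_n -> bool})
      ereal_sup [set (\sum_(i < n) sgn (eps i) * f i)%:E | f in F])%E.

End Defs.

(* Main.v *)
Require Import Defs.
From HB Require Import structures.
From mathcomp Require Import all_boot all_order all_algebra.
From mathcomp Require Import all_classical all_reals all_analysis.
From mathcomp Require Import ring lra.
Import Order.TTheory GRing.Theory Num.Theory.
Set Implicit Arguments. Unset Strict Implicit. Unset Printing Implicit Defensive.
Local Open Scope classical_set_scope.
Local Open Scope ring_scope.

Section Sup.
Variable R : realType.
Variable P : Type.
Implicit Types (G : set P) (f g : P -> R).

Definition supf G f : R := sup [set f p | p in G].
Definition ubd G f := exists B : R, forall p, G p -> f p <= B.

Lemma supf_ub G f p : ubd G f -> G p -> f p <= supf G f.
Proof.
move=> [B hB] Gp; apply: ub_le_sup; last by exists p.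
by exists B => _ [q Gq <-]; exact: hB.
Qed.

Lemma supf_le G f B : G !=set0 -> (forall p, G p -> f p <= B) -> supf G f <= B.
Proof.
move=> [p Gp] hB; apply: ge_sup; first by exists (f p), p.
by move=> _ [q Gq <-]; exact: hB.
Qed.

Lemma supf_add G f g : G !=set0 -> ubd G f -> ubd G g ->
  supf G (fun p => f p + g p) <= supf G f + supf G g.
Proof.
move=> G0 hf hg; apply: supf_le => // p Gp.
by apply: lerD; apply: supf_ub.
Qed.

Lemma supf_mono G f g : G !=set0 -> ubd G g -> (forall p, G p -> f p <= g p) ->
  supf G f <= supf G g.
Proof.
move=> G0 hg hfg; apply: supf_le => // p Gp.
by apply: le_trans (hfg _ Gp) _; apply: supf_ub.
Qed.

Lemma step G c a u : G !=set0 -> ubd G c ->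
  (exists B, forall p, G p -> `|a p| <= B /\ `|u p| <= B) ->
  (forall p q, G p -> G q -> `|a p - a q| <= `|u p - u q|) ->
  supf G (fun p => c p + a p) + supf G (fun p => c p - a p) <=
  supf G (fun p => c p + u p) + supf G (fun p => c p - u p).
Proof.
move=> G0 [Bc hc] [B hB] hL.
have ubu : ubd G (fun p => c p + u p).
  exists (Bc + B) => p Gp; apply: lerD; first exact: hc.
  by apply: le_trans (ler_norm _) (hB _ Gp).2.
have ubu' : ubd G (fun p => c p - u p).
  exists (Bc + B) => p Gp; apply: lerD; first exact: hc.
  by apply: le_trans (ler_norm _) _; rewrite normrN; exact: (hB _ Gp).2.
pose T := supf G (fun p => c p + u p) + supf G (fun p => c p - u p).
have key : forall p q, G p -> G q -> c p + a p + (c q - a q) <= T.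
  move=> p q Gp Gq.
  have h1 := hL p q Gp Gq.
  have h2 : a p - a q <= `|u p - u q| by apply: le_trans (ler_norm _) h1.
  case: (leP (u q) (u p)) => huq.
  - have e : `|u p - u q| = u p - u q by rewrite ger0_norm // subr_ge0.
    apply: le_trans (_ : (c p + u p) + (c q - u q) <= T); last first.
      by apply: lerD; [exact: (supf_ub ubu Gp)|exact: (supf_ub ubu' Gq)].
    rewrite e in h2; lra.
  - have e : `|u p - u q| = u q - u p by rewrite ltr0_norm ?subr_lt0 // opprB.
    apply: le_trans (_ : (c q + u q) + (c p - u p) <= T); last first.
      by apply: lerD; [exact: (supf_ub ubu Gq)|exact: (supf_ub ubu' Gp)].
    rewrite e in h2; lra.
have h3 : supf G (fun p => c p + a p) <= T - supf G (fun p => c p - a p).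
  apply: supf_le => // p Gp.
  rewrite lerBrDr addrC -lerBrDr.
  apply: supf_le => // q Gq.
  have := key p q Gp Gq; lra.
move: h3; rewrite /T; lra.
Qed.
End Sup.
Section Contr.
Variable R : realType.

Lemma sgnN (b : bool) : sgn R (~~ b) = - sgn R b.
Proof. by case: b; rewrite /sgn /= ?opprK. Qed.

Lemma norm_sgnM (b : bool) (x : R) : `|sgn R b * x| = `|x|.
Proof. by case: b; rewrite /sgn ?mul1r ?mulN1r ?normrN. Qed.

Lemma ubd_sum (P : Type) (G : set P) n (F : 'I_n -> P -> R) (B : R) (Q : pred 'I_n) :
  (forall i p, G p -> `|F i p| <= B) -> ubd G (fun p => \sum_(i | Q i) F i p).
Proof.
move=> hB; exists (\sum_(i | Q i) B) => p Gp; apply: ler_sum => i _.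
exact: le_trans (ler_norm _) (hB i p Gp).
Qed.

Lemma contraction (P : Type) (G : set P) (n : nat) (a u : 'I_n -> P -> R) :
  G !=set0 ->
  (exists B, forall i p, G p -> `|a i p| <= B /\ `|u i p| <= B) ->
  (forall i p q, G p -> G q -> `|a i p - a i q| <= `|u i p - u i q|) ->
  \sum_(e : {ffun 'I_n -> bool}) supf G (fun p => \sum_i sgn R (e i) * a i p)
  <= \sum_(e : {ffun 'I_n -> bool}) supf G (fun p => \sum_i sgn R (e i) * u i p).
Proof.
move=> G0 [B hB] hL.
pose hyb m (i : 'I_n) p := if (i < m)%N then u i p else a i p.
pose H m (e : {ffun 'I_n -> bool}) :=
  supf G (fun p => \sum_i sgn R (e i) * hyb m i p).
have hbnd : forall m i p, G p -> `|hyb m i p| <= B.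
  by move=> m i p Gp; rewrite /hyb; case: ifP => _; have [] := hB i p Gp.
have stepm : forall m, \sum_e H m e <= \sum_e H m.+1 e.
  move=> m; case: (ltnP m n) => hm; last first.
    rewrite le_eqVlt; apply/orP; left; apply/eqP; apply: eq_bigr => e _; rewrite /H /hyb; congr supf; apply: funext => p.
    apply: eq_bigr => i _; have := ltn_ord i => hi.
    by rewrite (leq_trans hi hm) (leq_trans hi (leqW hm)).
  pose j := Ordinal hm.
  pose fl (e : {ffun 'I_n -> bool}) : {ffun 'I_n -> bool} :=
    [ffun i => if i == j then ~~ e i else e i].
  have flK : involutive fl.
    move=> e; apply/ffunP => i; rewrite !ffunE.
    by case: eqP => _ //; rewrite negbK.
  have flinj : injective fl := inv_inj flK.
  have per : forall e, H m e + H m (fl e) <= H m.+1 e + H m.+1 (fl e).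
    move=> e.
    pose c p := \sum_(i | i != j) sgn R (e i) * hyb m i p.
    have dec : forall m' (e' : {ffun 'I_n -> bool}),
        (forall i, i != j -> e' i = e i) -> (m' = m \/ m' = m.+1) ->
        forall p, \sum_i sgn R (e' i) * hyb m' i p
                  = sgn R (e' j) * hyb m' j p + c p.
      move=> m' e' he' hm' p; rewrite (bigD1 j) //=; congr (_ + _).
      apply: eq_bigr => i hi; rewrite he' //; congr (_ * _); rewrite /hyb.
      have -> : (i < m')%N = (i < m)%N.
        case: hm' => -> //; rewrite ltnS leq_eqVlt.
        suff -> : (nat_of_ord i == m) = false by [].
        by apply/negbTE; apply: contra hi => /eqP hi; apply/eqP/val_inj.
      by [].
    have hfl : forall i, i != j -> fl e i = e i.
      by move=> i hi; rewrite ffunE (negbTE hi).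
    have flj : fl e j = ~~ e j by rewrite ffunE eqxx.
    have hja : forall p, hyb m j p = a j p by move=> p; rewrite /hyb ltnn.
    have hju : forall p, hyb m.+1 j p = u j p by move=> p; rewrite /hyb ltnSn.
    have -> : H m e = supf G (fun p => c p + sgn R (e j) * a j p).
      congr supf; apply: funext => p; rewrite dec //; [|by left].
      by rewrite hja addrC.
    have -> : H m (fl e) = supf G (fun p => c p - sgn R (e j) * a j p).
      congr supf; apply: funext => p; rewrite dec //; [|by left].
      by rewrite hja flj sgnN mulNr addrC.
    have -> : H m.+1 e = supf G (fun p => c p + sgn R (e j) * u j p).
      congr supf; apply: funext => p; rewrite dec //; [|by right].
      by rewrite hju addrC.
    have -> : H m.+1 (fl e) = supf G (fun p => c p - sgn R (e j) * u j p).
      congr supf; apply: funext => p; rewrite dec //; [|by right].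
      by rewrite hju flj sgnN mulNr addrC.
    have ubc : ubd G c.
      apply: (@ubd_sum P G n (fun i p => sgn R (e i) * hyb m i p) B (fun i => i != j)).
      by move=> i p Gp; rewrite norm_sgnM; exact: hbnd.
    apply: (@step R P G c (fun p => sgn R (e j) * a j p) (fun p => sgn R (e j) * u j p)) => //.
      by exists B => p Gp; rewrite !norm_sgnM; apply: hB.
    move=> p q Gp Gq; rewrite -!mulrBr !norm_sgnM; exact: hL.

  have rf : forall m', \sum_e H m' e = \sum_e H m' (fl e).
    by move=> m'; rewrite (reindex_inj flinj).
  have : \sum_e H m e + \sum_e H m e <= \sum_e H m.+1 e + \sum_e H m.+1 e.
    rewrite {2}rf {2}(rf m.+1) -!big_split /=.
    by apply: ler_sum => e _; exact: per.
  lra.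
have all_m : forall m, \sum_e H 0 e <= \sum_e H m e.
  elim=> [//|m IH]; exact: le_trans IH (stepm m).
have E0 : forall e : {ffun 'I_n -> bool}, supf G (fun p => \sum_i sgn R (e i) * a i p) = H 0 e.
  by move=> e; rewrite /H /hyb.
have En : forall e : {ffun 'I_n -> bool}, supf G (fun p => \sum_i sgn R (e i) * u i p) = H n e.
  move=> e; rewrite /H /hyb; congr supf; apply: funext => p.
  by apply: eq_bigr => i _; rewrite ltn_ord.
under eq_bigr do rewrite E0.
under [X in _ <= X]eq_bigr do rewrite En.
exact: all_m.
Qed.
End Contr.
Section Rad.
Variable R : realType.

Lemma sgn_sq (b : bool) : sgn R b * sgn R b = 1.
Proof. by case: b; rewrite /sgn ?mul1r ?mulN1r ?opprK. Qed.

Lemma card_sgn n : \sum_(e : {ffun 'I_n -> bool}) (1 : R) = 2 ^+ n.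
Proof.
rewrite sumr_const card_ffun card_bool card_ord.
  by rewrite natrX.
Qed.

Lemma corr n (i i' : 'I_n) :
  \sum_(e : {ffun 'I_n -> bool}) sgn R (e i) * sgn R (e i') =
  if i == i' then 2 ^+ n else 0.
Proof.
case: eqP => [<-|hne].
  by under eq_bigr do rewrite sgn_sq; rewrite card_sgn.
pose fl (e : {ffun 'I_n -> bool}) : {ffun 'I_n -> bool} :=
  [ffun k => if k == i then ~~ e k else e k].
have flK : involutive fl.
  move=> e; apply/ffunP => k; rewrite !ffunE.
  by case: eqP => _ //; rewrite negbK.
have flinj : injective fl := inv_inj flK.
set S := \sum_e _.
have : S = - S.
  rewrite {1}/S (reindex_inj flinj) /S -sumrN; apply: eq_bigr => e _.
  rewrite !ffunE eqxx.
  have -> : (i' == i) = false by apply/negbTE/eqP => h; apply: hne.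
  by rewrite sgnN mulNr.
lra.
Qed.

Lemma sq_rad n (z : 'I_n -> R) :
  \sum_(e : {ffun 'I_n -> bool}) (\sum_i sgn R (e i) * z i) ^+ 2
  = 2 ^+ n * \sum_i z i ^+ 2.
Proof.
have E : forall e : {ffun 'I_n -> bool}, (\sum_i sgn R (e i) * z i) ^+ 2 =
   \sum_i \sum_i' (z i * z i') * (sgn R (e i) * sgn R (e i')).
  move=> e; rewrite expr2 big_distrl /=; apply: eq_bigr => i _.
  rewrite big_distrr /=; apply: eq_bigr => i' _; ring.
under eq_bigr do rewrite E.
rewrite exchange_big /= big_distrr /=; apply: eq_bigr => i _.
rewrite exchange_big /=.
under eq_bigr do rewrite -mulr_sumr corr.
rewrite (bigD1 i) //= eqxx big1 ?addr0; first by rewrite expr2 mulrC.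
by move=> i' /negbTE; rewrite eq_sym => ->; rewrite mulr0.
Qed.
End Rad.
Section Lin.
Variable R : realType.

Lemma sqrn (x : R) : `|x| ^+ 2 = x ^+ 2.
Proof. exact: real_normK (num_real x). Qed.

Definition dot d (w x : 'cV[R]_d) : R := \sum_l w l 0 * x l 0.
Definition Wb d (a : R) : set 'cV[R]_d := [set w | norm2 w <= a].

Lemma norm2_sq d (w : 'cV[R]_d) a : norm2 w <= a -> \sum_l w l 0 ^+ 2 <= a ^+ 2.
Proof.
rewrite /norm2 => h.
have S0 : 0 <= \sum_l w l 0 ^+ 2 by apply: sumr_ge0 => l _; exact: sqr_ge0.
rewrite -(sqr_sqrtr S0) !expr2; apply: ler_pM => //; exact: sqrtr_ge0.
Qed.

Lemma amgm (t w v : R) : 0 < t -> `|w * v| <= (t * w ^+ 2 + v ^+ 2 / t) / 2.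
Proof.
move=> t0.
have e : (t * w ^+ 2 + v ^+ 2 / t) / 2 - `|w| * `|v| = (t * `|w| - `|v|) ^+ 2 / (2 * t).
  rewrite -[w ^+ 2]sqrn -[v ^+ 2]sqrn.
  by field; exact: lt0r_neq0.
rewrite normrM -subr_ge0 e; apply: divr_ge0; first exact: sqr_ge0.
by apply: mulr_ge0 => //; exact: ltW.
Qed.

Lemma dot_amgm d (w v : 'cV[R]_d) t : 0 < t ->
  `|dot w v| <= (t * \sum_l w l 0 ^+ 2 + (\sum_l v l 0 ^+ 2) / t) / 2.
Proof.
move=> t0; rewrite /dot; apply: le_trans (ler_norm_sum _ _ _) _.
rewrite big_distrr /= mulr_suml -big_split /= mulr_suml.
by apply: ler_sum => l _; apply: amgm.
Qed.

Lemma abs_dot d (w x : 'cV[R]_d) a b : 0 < a -> 0 < b ->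
  norm2 w <= a -> norm2 x <= b -> `|dot w x| <= a * b.
Proof.
move=> a0 b0 hw hx.
have t0 : 0 < b / a by apply: divr_gt0.
apply: le_trans (dot_amgm w x t0) _.
have h1 := norm2_sq hw; have h2 := norm2_sq hx.
apply: le_trans (_ : (b / a * a ^+ 2 + b ^+ 2 / (b / a)) / 2 <= _).
  apply: ler_pM => //.
  - apply: addr_ge0; first by apply: mulr_ge0; [exact: ltW|apply: sumr_ge0 => l _; exact: sqr_ge0].
    by apply: divr_ge0; [apply: sumr_ge0 => l _; exact: sqr_ge0|exact: ltW].
  - apply: lerD; first by apply: ler_wpM2l => //; exact: ltW.
    by apply: ler_wpM2r => //; rewrite invr_ge0; exact: ltW.
rewrite le_eqVlt; apply/orP; left; apply/eqP. field.
by rewrite (lt0r_neq0 a0) (lt0r_neq0 b0).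
Qed.

Lemma Wb0 d (a : R) : 0 < a -> (@Wb d a) !=set0.
Proof.
move=> a0; exists 0; rewrite /Wb /= /norm2.
rewrite big1 ?sqrtr0; first exact: ltW.
by move=> l _; rewrite mxE expr2 mulr0.
Qed.

Lemma lin_bound n d (a b c : R) (y : 'I_n -> 'cV[R]_d) :
  (0 < n)%N -> 0 < a -> 0 < b -> (forall i, norm2 (y i) <= b) ->
  \sum_(e : {ffun 'I_n -> bool})
     supf (@Wb d a) (fun w => \sum_i sgn R (e i) * (c * dot w (y i)))
  <= 2 ^+ n * (`|c| * a * b * Num.sqrt n%:R).
Proof.
move=> n0 a0 b0 hy.
have W0 := Wb0 d a0.
have RHS0 : 0 <= 2 ^+ n * (`|c| * a * b * Num.sqrt n%:R).
  apply: mulr_ge0; first exact: exprn_ge0.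
  apply: mulr_ge0; last exact: sqrtr_ge0.
  by apply: mulr_ge0; [apply: mulr_ge0 => //; exact: ltW|exact: ltW].
have [->|c0] := eqVneq c 0.
  rewrite normr0 !mul0r mulr0; apply: sumr_le0 => e _; apply: supf_le => // w _.
  by rewrite big1 // => i _; rewrite mul0r mulr0.
have cn0 : 0 < `|c| by rewrite normr_gt0.
have sn0 : 0 < Num.sqrt (n%:R : R) by rewrite sqrtr_gt0 ltr0n.
pose t := `|c| * b * Num.sqrt n%:R / a.
have t0 : 0 < t by rewrite /t; apply: divr_gt0 => //; apply: mulr_gt0 => //; exact: mulr_gt0.
pose V (e : {ffun 'I_n -> bool}) : 'cV[R]_d :=
  \col_l \sum_i sgn R (e i) * (c * y i l 0).
pose N e := \sum_l V e l 0 ^+ 2.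
have h1 : forall e : {ffun 'I_n -> bool}, supf (@Wb d a) (fun w => \sum_i sgn R (e i) * (c * dot w (y i)))
                    <= (t * a ^+ 2 + N e / t) / 2.
  move=> e; apply: supf_le => // w hw.
  have -> : \sum_i sgn R (e i) * (c * dot w (y i)) = dot w (V e).
    rewrite /dot; under [RHS]eq_bigr do rewrite mxE big_distrr /=.
    rewrite exchange_big /=; apply: eq_bigr => i _.
    rewrite /dot !big_distrr /=; apply: eq_bigr => l _; ring.
  apply: le_trans (ler_norm _) _; apply: le_trans (dot_amgm w (V e) t0) _.
  apply: ler_wpM2r; first by rewrite invr_ge0 ler0n.
  apply: lerD => //.
  by apply: ler_wpM2l; [exact: ltW| exact: norm2_sq].
apply: le_trans (ler_sum _ (fun e _ => h1 e)) _.
have hN : \sum_e N e <= 2 ^+ n * (c ^+ 2 * (n%:R * b ^+ 2)).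
  rewrite /N exchange_big /=.
  under eq_bigr do under eq_bigr do rewrite mxE.
  under eq_bigr do rewrite sq_rad.
  rewrite -big_distrr /=; apply: ler_wpM2l; first exact: exprn_ge0.
  have -> : (n%:R : R) * b ^+ 2 = \sum_(i < n) b ^+ 2 by rewrite sumr_const card_ord mulr_natl.
  rewrite exchange_big /= big_distrr /=.
  apply: ler_sum => i _.
  under eq_bigr do rewrite exprMn.
  rewrite -big_distrr /=; apply: ler_wpM2l; first exact: sqr_ge0.
  exact: norm2_sq.
have -> : \sum_e (t * a ^+ 2 + N e / t) / 2
          = (2 ^+ n * (t * a ^+ 2) + (\sum_e N e) / t) / 2.
  rewrite -big_distrl /= big_split /= -big_distrl /=. 
  rewrite sumr_const card_ffun card_bool card_ord -(mulr_natr t) natrX -mulr_suml; ring.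
apply: le_trans (_ : (2 ^+ n * (t * a ^+ 2) + 2 ^+ n * (c ^+ 2 * (n%:R * b ^+ 2)) / t) / 2 <= _).
  apply: ler_wpM2r; first by rewrite invr_ge0 ler0n.
  apply: lerD => //; apply: ler_wpM2r => //; by rewrite invr_ge0 ltW.
rewrite le_eqVlt; apply/orP; left; apply/eqP.
have hs : Num.sqrt (n%:R : R) ^+ 2 = n%:R by rewrite sqr_sqrtr // ler0n.
rewrite -(sqrn c) /t; move: hs sn0; move: (Num.sqrt (n%:R : R)) => s hs s0.
rewrite -hs; field.
by rewrite (lt0r_neq0 a0) (lt0r_neq0 b0) (lt0r_neq0 s0) (lt0r_neq0 cn0).
Qed.
End Lin.

Section Main.
Variable R : realType.

Lemma le_bigmax_seq (I : eqType) (r : seq I) (F : I -> R) (x0 : R) j :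
  j \in r -> F j <= \big[Num.max/x0]_(i <- r) F i.
Proof.
elim: r => [//|i r IH]; rewrite inE big_cons => /orP [/eqP ->|hj].
  by rewrite le_max lexx.
by rewrite le_max (IH hj) orbT.
Qed.

End Main.
Unset Implicit Arguments.

Theorem theorem2 (R : realType) :
  exists C : R, 0 < C /\
  forall (n d k : nat) (phi : R -> R) (L b a : R)
         (x x' : 'I_n -> 'cV[R]_d),
    (0 < n)%N -> (0 < d)%N -> (0 < k)%N ->
    0 <= L ->
    (forall u v : R, `|phi u - phi v| <= L * `|u - v|) ->
    phi 0 = 0 ->
    0 < b ->
    (forall i, norm2 (x i) <= b) ->
    (forall i, norm2 (x' i) <= b) ->
    0 < a ->
    (rademacher (Fk phi x x' (@Gball R d k a)) <=
     (C * ((n%:R)^-1 +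
           a ^+ 2 * b ^+ 2 * L ^+ 2 / Num.sqrt (n%:R)
           * Num.sqrt (ln (2 * d%:R))
           * ln (2 + n%:R * b ^+ 2 * a ^+ 2 * L ^+ 2)))%:E)%E.
Proof.
have l2 : 0 < ln (2 : R) by apply: ln_gt0; lra.
have s2 : 0 < Num.sqrt (ln (2 : R)) by rewrite sqrtr_gt0.
exists (8 / (Num.sqrt (ln (2 : R)) * ln 2)); split.
  by apply: divr_gt0 => //; apply: mulr_gt0.
move=> n d k phi L b a x x' n0 d0 k0 L0 hphi phi0 b0 hx hx' a0.
pose W := @Wb R d a.
have W0 : W !=set0 by exact: Wb0.
pose p (i : 'I_n) (w : 'cV[R]_d) := phi (dot w (x i)).
pose q (i : 'I_n) (w : 'cV[R]_d) := phi (dot w (x' i)).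
pose h i w := (p i w - q i w) ^+ 2.
pose Q (e : {ffun 'I_n -> bool}) := supf W (fun w => \sum_i sgn R (e i) * h i w).
pose M := a ^+ 2 * b ^+ 2 * L ^+ 2.
have hphiB : forall s, `|phi s| <= L * `|s|.
  by move=> s; have := hphi s 0; rewrite phi0 !subr0.
have hpB : forall i w, W w -> `|p i w| <= L * (a * b).
  move=> i w hw; apply: le_trans (hphiB _) _; apply: ler_wpM2l => //.
  exact: abs_dot.
have hqB : forall i w, W w -> `|q i w| <= L * (a * b).
  move=> i w hw; apply: le_trans (hphiB _) _; apply: ler_wpM2l => //.
  exact: abs_dot.
have hDB : forall i w, W w -> `|p i w - q i w| <= 2 * (L * (a * b)).
  move=> i w hw; apply: le_trans (ler_normB _ _) _.
  have := hpB i w hw; have := hqB i w hw; lra.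
have stepA : (rademacher (Fk phi x x' (@Gball R d k a)) <=
              (((n%:R)^-1 / 2 ^+ n) * \sum_e Q e)%:E)%E.
  have ubQ : forall e : {ffun 'I_n -> bool}, ubd W (fun w => \sum_i sgn R (e i) * h i w).
    move=> e; apply: (ubd_sum (B := (2 * (L * (a * b))) ^+ 2)) => i w hw.
    rewrite norm_sgnM /h normrX !expr2; apply: ler_pM => //; exact: hDB.
  rewrite /rademacher (EFinM ((n%:R)^-1 / 2 ^+ n) (\sum_e Q e)) -sumEFin; apply: lee_wpmul2l.
    rewrite lee_fin; apply: divr_ge0; [by rewrite invr_ge0 ler0n|exact: exprn_ge0].
  apply: lee_sum => e _; apply: ge_ereal_sup => _ [f [A hA <-] <-]; rewrite lee_fin.
  have hz : forall i, zeta (phivec phi (A^T *m x i)) (phivec phi (A^T *m x' i))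
      = (k%:R)^-1 * \sum_j h i (col j A).
    move=> i; rewrite /zeta; congr (_ * _); apply: eq_bigr => j _.
    rewrite /h /p /q /phivec !mxE /dot; congr ((phi _ - phi _) ^+ 2);
      by apply: eq_bigr => l _; rewrite !mxE.
  have hcol : forall j, W (col j A).
    move=> j; rewrite /W /Wb /=; apply: le_trans hA.
    exact: (@le_bigmax_seq R _ (index_enum 'I_k) (fun j => norm2 (col j A)) 0 j (mem_index_enum j)).
  under eq_bigr do rewrite hz.
  have -> : \sum_i sgn R (e i) * ((k%:R)^-1 * \sum_j h i (col j A))
      = (k%:R)^-1 * \sum_(j < k) \sum_i sgn R (e i) * h i (col j A).
    rewrite exchange_big big_distrr /=; apply: eq_bigr => i _.
    rewrite !big_distrr /=; apply: eq_bigr => j _; ring.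
  apply: le_trans (_ : _ <= (k%:R)^-1 * \sum_(j < k) Q e) _.
    apply: ler_wpM2l; first by rewrite invr_ge0 ler0n.
    apply: ler_sum => j _; exact: (supf_ub (ubQ e) (hcol j)).
  rewrite sumr_const card_ord -(mulr_natl (Q e) k) mulrA mulVf ?mul1r //.
  by rewrite pnatr_eq0 -lt0n.
have cstep : forall (c : R) (y : 'I_n -> 'cV[R]_d), (forall i, norm2 (y i) <= b) ->
    \sum_(e : {ffun 'I_n -> bool}) supf W (fun w => \sum_i sgn R (e i) * (c * phi (dot w (y i))))
    <= 2 ^+ n * (`|c| * L * a * b * Num.sqrt n%:R).
  move=> c y hy.
  apply: le_trans (_ : _ <= \sum_(e : {ffun 'I_n -> bool}) supf W
       (fun w => \sum_i sgn R (e i) * ((c * L) * dot w (y i)))) _.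
    apply: (contraction (a := fun i w => c * phi (dot w (y i)))
                        (u := fun i w => (c * L) * dot w (y i))) => //.
      exists (`|c| * L * (a * b)) => i w hw; split.
        rewrite normrM -mulrA; apply: ler_wpM2l => //.
        apply: le_trans (hphiB _) _; apply: ler_wpM2l => //; exact: abs_dot.
      rewrite normrM normrM (ger0_norm L0); apply: ler_wpM2l.
        by apply: mulr_ge0.
      exact: abs_dot.
    move=> i w w' hw hw'; rewrite -!mulrBr !normrM (ger0_norm L0) -mulrA.
    by apply: ler_wpM2l => //; exact: hphi.
  apply: le_trans (lin_bound (c * L) n0 a0 b0 hy) _.
  by rewrite normrM (ger0_norm L0).
pose K := 4 * (L * (a * b)).
have K0 : 0 <= K by apply: mulr_ge0 => //; apply: mulr_ge0 => //; apply: mulr_ge0; exact: ltW.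
have LB0 : 0 <= L * (a * b) by apply: mulr_ge0 => //; apply: mulr_ge0; exact: ltW.
have stepQ : \sum_e Q e <= 2 ^+ n * (8 * M * Num.sqrt n%:R).
  apply: le_trans (_ : _ <= \sum_(e : {ffun 'I_n -> bool}) supf W
       (fun w => \sum_i sgn R (e i) * (K * (p i w - q i w)))) _.
    apply: (contraction (a := h) (u := fun i w => K * (p i w - q i w))) => //.
      exists ((2 * (L * (a * b))) ^+ 2 + K * (2 * (L * (a * b)))) => i w hw.
      have hD := hDB i w hw.
      have hD0 : 0 <= `|p i w - q i w| by [].
      split.
        rewrite /h normrX; apply: le_trans (_ : _ <= (2 * (L * (a * b))) ^+ 2) _.
          by rewrite !expr2; apply: ler_pM.
        by rewrite lerDl; apply: mulr_ge0 => //; apply: mulr_ge0.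
      rewrite normrM (ger0_norm K0); apply: le_trans (_ : _ <= K * (2 * (L * (a * b)))) _.
        exact: ler_wpM2l.
      by rewrite lerDr; exact: sqr_ge0.
    move=> i w w' hw hw'; rewrite /h subr_sqr -mulrBr normrM normrM (ger0_norm K0) mulrC.
    apply: ler_wpM2r => //; apply: le_trans (ler_normD _ _) _.
    have := hDB i w hw; have := hDB i w' hw'; rewrite /K; lra.
  apply: le_trans (_ : _ <= \sum_(e : {ffun 'I_n -> bool}) (supf W
       (fun w => \sum_i sgn R (e i) * (K * phi (dot w (x i)))) + supf W
       (fun w => \sum_i sgn R (e i) * ((- K) * phi (dot w (x' i)))))) _.
    apply: ler_sum => e _.
    have -> : (fun w => \sum_i sgn R (e i) * (K * (p i w - q i w))) =
      (fun w => \sum_i sgn R (e i) * (K * phi (dot w (x i))) +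
                \sum_i sgn R (e i) * ((- K) * phi (dot w (x' i)))).
      apply: funext => w; rewrite -big_split /=; apply: eq_bigr => i _.
      rewrite /p /q; ring.
    apply: supf_add => //.
      apply: (ubd_sum (B := K * (L * (a * b)))).
      move=> i w hw; rewrite norm_sgnM normrM (ger0_norm K0); apply: ler_wpM2l => //.
      exact: hpB.
    apply: (ubd_sum (B := K * (L * (a * b)))).
    move=> i w hw; rewrite norm_sgnM normrM normrN (ger0_norm K0); apply: ler_wpM2l => //.
    exact: hqB.
  rewrite big_split /=.
  apply: le_trans (lerD (cstep K x hx) (cstep (- K) x' hx')) _.
  rewrite normrN (ger0_norm K0) /K /M; rewrite le_eqVlt; apply/orP; left; apply/eqP; ring.
apply: le_trans stepA _; rewrite lee_fin.
have sn0 : 0 < Num.sqrt (n%:R : R) by rewrite sqrtr_gt0 ltr0n.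
have hs : Num.sqrt (n%:R : R) ^+ 2 = n%:R by rewrite sqr_sqrtr // ler0n.
have M0 : 0 <= M by rewrite /M; apply: mulr_ge0; [apply: mulr_ge0|]; exact: sqr_ge0.
have X0 : 0 <= M / Num.sqrt n%:R by apply: divr_ge0 => //; exact: ltW.
apply: le_trans (_ : _ <= 8 * (M / Num.sqrt n%:R)) _.
  apply: le_trans (_ : _ <= (n%:R)^-1 / 2 ^+ n * (2 ^+ n * (8 * M * Num.sqrt n%:R))) _.
    apply: ler_wpM2l => //; apply: divr_ge0; rewrite ?invr_ge0 ?ler0n ?exprn_ge0.
  rewrite le_eqVlt; apply/orP; left; apply/eqP.
  move: hs sn0 X0; move: (Num.sqrt (n%:R : R)) => s hs s0 _; rewrite -hs; field.
  by rewrite (lt0r_neq0 s0) expf_neq0.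
have hsl : Num.sqrt (ln (2 : R)) <= Num.sqrt (ln (2 * d%:R)).
  have h2d : (2 : R) <= 2 * d%:R.
    have : (1 <= d%:R :> R) by rewrite ler1n.
    lra.
  rewrite ler_sqrt; last by apply: ln_ge0; lra.
  rewrite ler_ln ?posrE; lra.
have NB : 0 <= n%:R * b ^+ 2 * a ^+ 2 * L ^+ 2.
  by apply: mulr_ge0; [apply: mulr_ge0; [apply: mulr_ge0|]|]; rewrite ?ler0n ?sqr_ge0.
have hll : ln (2 : R) <= ln (2 + n%:R * b ^+ 2 * a ^+ 2 * L ^+ 2).
  rewrite ler_ln ?posrE; lra.
set C := 8 / _.
have C0 : 0 <= C by apply: divr_ge0 => //; apply: mulr_ge0; exact: ltW.
have -> : 8 * (M / Num.sqrt n%:R) = C * (M / Num.sqrt n%:R * (Num.sqrt (ln 2) * ln 2)).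
  rewrite /C; field; by rewrite (lt0r_neq0 s2) (lt0r_neq0 l2) (lt0r_neq0 sn0).
apply: ler_wpM2l => //.
rewrite -/M; apply: le_trans (_ : _ <= M / Num.sqrt n%:R *
   (Num.sqrt (ln (2 * d%:R)) * ln (2 + n%:R * b ^+ 2 * a ^+ 2 * L ^+ 2))) _.
  apply: ler_wpM2l => //.
  by apply: ler_pM => //; exact: ltW.
by rewrite mulrA -subr_ge0 addrK invr_ge0 ler0n.
Qed.
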